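(* Consider the Data Revocation Game with homogeneous dependent users: all users have the same parameters $\theta>0$, $\ell>0$, $\xi>0$, $d^{\max}>0$, and independence index $\epsilon_i=0$ for all $i$ (with the convention $\ln 0=-\infty$). Then: (1) If $d^{\max}>\frac{1}{I\xi\ell}$, the symmetric profile with, for all $i\in\mathcal I$, $$d_i^*=\frac{1}{2\theta\ell(I-1)}\Big(d^{\max}(\xi+\theta\ell(I-1))-\sqrt{(d^{\max})^2(\xi+\theta\ell(I-1))^2-4\theta(I-1)d^{\max}/I}\Big)$$ satisfies $d_i^*\in(0,d^{\max})$ and is a Nash equilibrium. (2) If $d^{\max}\le\frac{1}{I\xi\ell}$, the profile $d_i^*=d^{\max}$ for all $i\in\mathcal I$ is a Nash equilibrium.
   Context: Data Revocation Game: a finite set of users $\mathcal I=\{1,\dots,I\}$, $I\ge 2$. Each user $i$ has parameters $d_i^{\max}>0$, $\epsilon_i\ge 0$ (independence index), $\xi_i>0$ (marginal privacy cost), $\ell_i>0$ (data uniqueness level), $\theta_i\ge 0$ (marginal unlearning cost). Each user chooses $d_i\in[0,d_i^{\max}]$ (data kept). Payoff $$U_i(d_i,\boldsymbol{d_{-i}})=\ln\Big(\sum_{j\in\mathcal I}d_j+\epsilon_i\Big)-\xi_i d_i\ell_i-\theta_i d_i\sum_{j\neq i}\Big(1-\frac{d_j}{d_j^{\max}}\Big)\ell_j^2 .$$ A Nash equilibrium is a profile $(d_i^* )$ with $d_i^*\in[0,d_i^{\max}]$ and $U_i(d_i^*,\boldsymbol{d_{-i}^*})\ge U_i(d_i,\boldsymbol{d_{-i}^*})$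 for all $i$ and all $d_i\in[0,d_i^{\max}]$. *)

(* Defs.v *)
From HB Require Import structures.
From mathcomp Require Import all_boot all_order all_algebra.
From mathcomp Require Import all_classical all_reals all_analysis.
Set Implicit Arguments. Unset Strict Implicit. Unset Printing Implicit Defensive.
Import Order.TTheory GRing.Theory Num.Theory.
Local Open Scope ring_scope.

(* The payoff is extended-real valued so that ln 0 = -oo (convention of the paper);
   for a nonpositive argument of the logarithm the payoff is -oo. *)

Definition upd (R : realType) (I : nat) (d : 'I_I -> R) (i : 'I_I) (x : R) : 'I_I -> R :=
  fun j => if j == i then x else d j.

Definition payoff (R : realType) (I : nat)
  (dmax eps xi ell theta : 'I_I -> R) (i : 'I_I) (d : 'I_I -> R) : \bar R :=
  let S := \sum_(j < I) d j + eps i in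
  if 0 < S then
    (ln S - xi i * d i * ell i
       - theta i * d i * \sum_(j < I | j != i) (1 - d j / dmax j) * ell j ^+ 2)%:E
  else -oo%E.

Definition feasible (R : realType) (I : nat) (dmax : 'I_I -> R) (d : 'I_I -> R) : Prop :=
  forall i, 0 <= d i <= dmax i.

Definition nash_eq (R : realType) (I : nat)
  (dmax eps xi ell theta : 'I_I -> R) (d : 'I_I -> R) : Prop :=
  feasible dmax d /\
  forall (i : 'I_I) (x : R), 0 <= x <= dmax i ->
    (payoff dmax eps xi ell theta i (upd d i x) <= payoff dmax eps xi ell theta i d)%E.

(* Main.v *)
Require Import Defs.
From HB Require Import structures.
From mathcomp Require Import all_boot all_order all_algebra.
From mathcomp Require Import all_classical all_reals all_analysis.
From mathcomp Require Import ring lra.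
Import Order.TTheory GRing.Theory Num.Theory.
Local Open Scope ring_scope.

Lemma ln_le_sub1 (R : realType) (y : R) : 0 < y -> ln y <= y - 1.
Proof.
move=> y0; have := expR_ge1Dx (ln y); rewrite lnK ?posrE //; lra.
Qed.

Lemma sum_neq (R : realType) (I : nat) (i : 'I_I) (F : 'I_I -> R) (v : R) :
  (forall j, j != i -> F j = v) ->
  \sum_(j < I | j != i) F j = (I%:R - 1) * v.
Proof.
move=> HF; rewrite (eq_bigr (fun _ => v)) //.
rewrite sumr_const cardC1 card_ord.
have I0 : (0 < I)%N by apply: (leq_ltn_trans (leq0n i)); exact: ltn_ord.
have -> : I%:R = (I.-1)%:R + 1 :> R by rewrite natr1 prednK.
by rewrite addrK mulr_natl.
Qed.

Lemma sum_upd (R : realType) (I : nat) (i : 'I_I) (d x : R) :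
  \sum_(j < I) upd (fun _ => d) i x j = x + (I%:R - 1) * d.
Proof.
rewrite (bigD1 i) //= /upd eqxx; congr (_ + _).
by apply: sum_neq => j /negbTE ->.
Qed.

Lemma payoff_cmp (R : realType) (I : nat) (i : 'I_I) (dm xi ell theta d x : R) :
  (2 <= I)%N -> 0 < d -> 0 <= x ->
  ln (x + (I%:R - 1) * d) - ln (I%:R * d) <=
    (x - d) * (xi * ell + theta * (I%:R - 1) * (1 - d / dm) * ell ^+ 2) ->
  (payoff (fun _ => dm) (fun _ => 0%R) (fun _ => xi) (fun _ => ell) (fun _ => theta)
     i (upd (fun _ => d) i x) <=
   payoff (fun _ => dm) (fun _ => 0%R) (fun _ => xi) (fun _ => ell) (fun _ => theta)
     i (fun _ => d))%E.
Proof.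
move=> HI d0 x0 H.
have n1 : 1 < I%:R :> R by rewrite ltr1n.
rewrite /payoff sum_upd.
have -> : \sum_(j < I) (fun _ : 'I_I => d) j = I%:R * d.
  by rewrite sumr_const card_ord mulr_natl.
rewrite (@sum_neq _ _ i _ ((1 - d / dm) * ell ^+ 2)); last first.
  by move=> j /negbTE; rewrite /upd => ->.
rewrite (@sum_neq _ _ i _ ((1 - d / dm) * ell ^+ 2)) //.
rewrite /upd eqxx !addr0.
have S1 : 0 < x + (I%:R - 1) * d by apply: ltr_wpDl => //; apply: mulr_gt0; lra.
have S2 : 0 < I%:R * d by apply: mulr_gt0; lra.
rewrite S1 S2 lee_fin.
lra.
Qed.

Lemma ln_bound (R : realType) (n d x : R) : 1 < n -> 0 < d -> 0 <= x ->
  ln (x + (n - 1) * d) - ln (n * d) <= (x - d) / (n * d).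
Proof.
move=> n1 d0 x0.
have S1 : 0 < x + (n - 1) * d by apply: ltr_wpDl => //; apply: mulr_gt0; lra.
have S2 : 0 < n * d by apply: mulr_gt0; lra.
rewrite -ln_div ?posrE //.
apply: le_trans; first by apply: ln_le_sub1; exact: divr_gt0.
rewrite le_eqVlt; apply/orP; left; apply/eqP; field.
by rewrite !gt_eqF //; lra.
Qed.

Theorem proposition1 (R : realType) (I : nat) (theta ell xi dm : R) :
  (2 <= I)%N -> 0 < theta -> 0 < ell -> 0 < xi -> 0 < dm ->
  let c := fun _ : 'I_I => 0 : R in
  let K := fun v : R => fun _ : 'I_I => v in
  (dm > 1 / (I%:R * xi * ell) ->
     let ds := (dm * (xi + theta * ell * (I%:R - 1))
                - Num.sqrt (dm ^+ 2 * (xi + theta * ell * (I%:R - 1)) ^+ 2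
                            - 4 * theta * (I%:R - 1) * dm / I%:R))
               / (2 * theta * ell * (I%:R - 1)) in
     (0 < ds /\ ds < dm) /\ nash_eq (K dm) c (K xi) (K ell) (K theta) (K ds)) /\
  (dm <= 1 / (I%:R * xi * ell) ->
     nash_eq (K dm) c (K xi) (K ell) (K theta) (K dm)).
Proof.
move=> HI th0 l0 x0 dm0 c K; rewrite {}/c {}/K.
have n1 : 1 < I%:R :> R by rewrite ltr1n.
have n0 : I%:R != 0 :> R by rewrite gt_eqF //; lra.
split.
  move=> Hdm.
  set a := theta * ell * (I%:R - 1).
  set D := (dm ^+ 2 * _ - _).
  set s := Num.sqrt D.
  set ds := (_ - s) / _.
  have a0 : 0 < a by rewrite /a !mulr_gt0 //; lra.
  have Hds : 2 * a * ds = dm * (xi + a) - s by rewrite /ds /a; field; rewrite !gt_eqF //; lra.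
  clearbody ds.
  have Hq : 1 < dm * (I%:R * xi * ell).
    by rewrite -ltr_pdivrMr // ?mulr_gt0 //; lra.
  have HD : D - (dm * (xi - a)) ^+ 2 =
      4 * theta * (I%:R - 1) * dm / I%:R * (dm * (I%:R * xi * ell) - 1).
    by rewrite /D /a; field.
  have Dpos : (dm * (xi - a)) ^+ 2 < D.
    have : 0 < 4 * theta * (I%:R - 1) * dm / I%:R * (dm * (I%:R * xi * ell) - 1).
      by rewrite !mulr_gt0 ?invr_gt0 //; lra.
    rewrite -HD; lra.
  have s2 : s ^+ 2 = D.
    rewrite /s sqr_sqrtr //; apply: le_trans (ltW Dpos); exact: sqr_ge0.
  have s0 : 0 <= s by rewrite /s sqrtr_ge0.
  clearbody s.
  have HB : D < (dm * (xi + a)) ^+ 2.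
    have : D - (dm * (xi + a)) ^+ 2 = - (4 * theta * (I%:R - 1) * dm / I%:R).
      by rewrite /D /a; field.
    have : 0 < 4 * theta * (I%:R - 1) * dm / I%:R by rewrite !mulr_gt0 ?invr_gt0 //; lra.
    lra.
  have B0 : 0 < dm * (xi + a) by rewrite mulr_gt0 //; lra.
  have sB : s < dm * (xi + a) by nra.
  have sA : dm * (xi - a) < s by nra.
  have ds0 : 0 < ds by nra.
  have dsm : ds < dm by nra.
  have E : (2 * a * ds - dm * (xi + a)) ^+ 2 = D.
    by rewrite Hds -s2; ring.
  have key2 : 4 * a * (I%:R * ell * (dm * (xi + a) * ds - a * ds ^+ 2) - dm) =
      I%:R * ell * (D - (2 * a * ds - dm * (xi + a)) ^+ 2).
    by rewrite /D /a; field.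
  have key : I%:R * ell * (dm * (xi + a) * ds - a * ds ^+ 2) = dm.
    move: key2; rewrite E subrr mulr0 => /eqP; rewrite mulf_eq0 subr_eq0.
    by case/orP => // /eqP; lra.
  set C := xi * ell + theta * (I%:R - 1) * (1 - ds / dm) * ell ^+ 2.
  have FOC : C = 1 / (I%:R * ds).
    have -> : C = I%:R * ell * (dm * (xi + a) * ds - a * ds ^+ 2) / dm / (I%:R * ds).
      rewrite /C /a; field; rewrite !gt_eqF //; lra.
    by rewrite key divff // gt_eqF.
  split; first by [].
  split.
    by move=> j; apply/andP; split; lra.
  move=> i x /andP [xp xm].
  apply: payoff_cmp => //.
  apply: le_trans; first exact: ln_bound.
  rewrite -/C FOC; lra.
move=> Hdm.
have Hq : dm * (I%:R * xi * ell) <= 1.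
  by rewrite -ler_pdivlMr // ?mulr_gt0 //; lra.
split.
  by move=> j; apply/andP; split; lra.
move=> i x /andP [xp xm].
apply: payoff_cmp => //.
apply: le_trans; first exact: ln_bound.
rewrite divff ?gt_eqF // subrr mulr0 mul0r addr0.
set t := (I%:R * dm)^-1.
have t0 : 0 < t by rewrite invr_gt0 mulr_gt0 //; lra.
have tn : t * (I%:R * dm) = 1 by rewrite mulVf // gt_eqF // mulr_gt0 //; lra.
have h1 : t * (1 - dm * (I%:R * xi * ell)) - (t - xi * ell) = xi * ell * (1 - t * (I%:R * dm)).
  by ring.
rewrite tn subrr mulr0 in h1.
have h2 : 0 <= t * (1 - dm * (I%:R * xi * ell)) by rewrite mulr_ge0 //; lra.
have h3 : xi * ell <= t by lra.
have h4 : 0 <= (dm - x) * (t - xi * ell) by rewrite mulr_ge0 //; lra.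
lra.
Qed.
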